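(* Let $\Pi$ be a set of $n\ge2$ processes and let $\mathcal{G}^1,\mathcal{G}^2,\dots$ be an infinite sequence of simple directed graphs on $\Pi$ such that every $\mathcal{G}^r$, $r>0$, contains at most one root component. Then (i) there is at least one process $p$ such that $d_1(p,q)$ is finite for all $q\in\Pi$, and in fact $d_1(p,q)\le n(n-2)+1$ for all $q\in\Pi$. Conversely, (ii) for $n>2$ there exist sequences of graphs, each containing exactly one root component, such that no process $p$ is causally influenced by all other processes, i.e., there is no $p$ with $d_1(q,p)<\infty$ for all $q\in\Pi$.
   Context: $\mathcal{G}^r$ is the round-$r$ communication graph. A root component of $\mathcal{G}^r$ is a strongly connected component $\mathcal{R}$ of $\mathcal{G}^r$ such that there is no edge $(q\to p)\in\mathcal{G}^r$ with $p\in\mathcal{R}$, $q\notin\mathcal{R}$. Process $p$ causally influences $q$ in round $t$ if $q=p$ or $(p\to q)\in\mathcal{G}^t$. A causal chain of length $k\ge1$ from $p$ in round $t$ to $q$ is a sequence $p=p_0,\dots,p_k=q$ with $p_i$ causally influencing $p_{i+1}$ in round $t+i$ for $0\le i<k$; the causal distance $d_t(p,q)$ is the minimum length of such a chain, and $\infty$ if none exists. *)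

(* Defs.v *)
From mathcomp Require Import all_boot.
Set Implicit Arguments. Unset Strict Implicit. Unset Printing Implicit Defensive.

(* A simple directed graph on a finite process set T: an irreflexive edge relation
   (G p q means the edge p -> q). *)
Definition simple_digraph (T : finType) (G : rel T) : Prop := forall p, ~~ G p p.

Definition is_scc (T : finType) (G : rel T) (R : {set T}) : Prop :=
  exists2 p, p \in R & forall q, (q \in R) = (connect G p q && connect G q p).

Definition is_root_component (T : finType) (G : rel T) (R : {set T}) : Prop :=
  is_scc G R /\ forall p q, p \in R -> q \notin R -> ~~ G q p.

Definition at_most_one_root (T : finType) (G : rel T) : Prop :=
  forall R1 R2, is_root_component G R1 -> is_root_component G R2 -> R1 = R2.

Definition exactly_one_root (T : finType) (G : rel T) : Prop :=
  exists R, is_root_component G R /\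
    forall R', is_root_component G R' -> R' = R.

(* A graph sequence: round r graph is Gs r (only rounds r >= 1 are used). *)
Definition influences (T : finType) (Gs : nat -> rel T) (t : nat) (p q : T) : Prop :=
  q = p \/ Gs t p q.

Fixpoint causal_chain (T : finType) (Gs : nat -> rel T) (t k : nat) (p q : T) : Prop :=
  match k with
  | 0 => p = q
  | k'.+1 => exists r, influences Gs t p r /\ causal_chain Gs t.+1 k' r q
  end.

Definition causal_dist_le (T : finType) (Gs : nat -> rel T) (t : nat) (p q : T) (b : nat) : Prop :=
  exists2 k, 1 <= k <= b & causal_chain Gs t k p q.

Definition causal_dist_finite (T : finType) (Gs : nat -> rel T) (t : nat) (p q : T) : Prop :=
  exists2 k, 1 <= k & causal_chain Gs t k p q.

(* Main.v *)
Require Import Defs.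
From mathcomp Require Import all_boot zify.
Set Implicit Arguments. Unset Strict Implicit. Unset Printing Implicit Defensive.

Lemma src_exists (T : finType) (G : rel T) (v : T) :
  exists u, connect G u v /\ forall w, connect G w u -> connect G u w.
Proof.
have Pv : connect G v v by exact: connect0.
case: (@arg_minnP _ v (fun u => connect G u v) (fun u => #|[set w | connect G w u]|) Pv) => u Pu Hmin.
exists u; split => // w Hwu.
have Pw : connect G w v by exact: connect_trans Hwu Pu.
have Hsub : [set x | connect G x w] \subset [set x | connect G x u].
  by apply/subsetP => x; rewrite !inE => Hx; exact: connect_trans Hx Hwu.
have := Hmin w Pw => Hle.
have /eqP Heq : [set x | connect G x w] == [set x | connect G x u].
  by rewrite eqEcard Hsub Hle.
have : u \in [set x | connect G x u] by rewrite inE connect0.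
by rewrite -Heq inE.
Qed.

Lemma root_of (T : finType) (G : rel T) (u : T) :
  (forall w, connect G w u -> connect G u w) ->
  is_root_component G [set q | connect G u q && connect G q u].
Proof.
move=> Hu; split.
  by exists u; [rewrite inE connect0 | move=> q; rewrite inE].
move=> p q; rewrite !inE => /andP [Hup Hpu] Hq; apply/negP => Hqp.
have Hqu : connect G q u by apply: connect_trans (connect1 Hqp) Hpu.
by move: Hq; rewrite Hqu (Hu _ Hqu).
Qed.

Lemma universal (T : finType) (G : rel T) (x0 : T) :
  at_most_one_root G -> exists x, forall y, connect G x y.
Proof.
move=> H1.
have [u0 [_ Hu0]] := src_exists G x0.
exists u0 => y.
have [u [Huy Hu]] := src_exists G y.
have E := H1 _ _ (root_of Hu0) (root_of Hu).
have : u0 \in [set q | connect G u0 q && connect G q u0] by rewrite inE !connect0.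
rewrite E inE => /andP [_ Huu0].
exact: connect_trans Huu0 Huy.
Qed.

Lemma path_leave (T : finType) (G : rel T) (S : {set T}) s x :
  path G x s -> x \in S -> last x s \notin S ->
  exists a b, [/\ G a b, a \in S & b \notin S].
Proof.
elim: s x => [|y s IH] x /=; first by move=> _ ->.
move=> /andP [Gxy Hp] Hx Hl.
case Hy: (y \in S); first exact: IH Hp Hy Hl.
by exists x, y; rewrite Hy.
Qed.

Fixpoint reach (T : finType) (Gs : nat -> rel T) (p : T) (k : nat) : {set T} :=
  match k with
  | 0 => [set p]
  | k'.+1 => reach Gs p k' :|: [set q | [exists r in reach Gs p k', Gs k'.+1 r q]]
  end.

Lemma chain_snoc (T : finType) (Gs : nat -> rel T) k t p r q :
  causal_chain Gs t k p r -> influences Gs (t + k) r q -> causal_chain Gs t k.+1 p q.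
Proof.
elim: k t p => [|k IH] t p /=.
  by move=> ->; rewrite addn0 => Hi; exists q.
move=> [r' [Hi Hc]] Hrq; exists r'; split => //.
by apply: IH Hc _; rewrite addSnnS.
Qed.

Lemma reach_chain (T : finType) (Gs : nat -> rel T) p k q :
  q \in reach Gs p k -> causal_chain Gs 1 k p q.
Proof.
elim: k q => [|k IH] q /=; first by rewrite inE => /eqP ->.
rewrite !inE => /orP [Hq | /existsP [r /andP [Hr Hrq]]].
  by apply: chain_snoc (IH _ Hq) _; left.
by apply: chain_snoc (IH _ Hr) _; right; rewrite add1n.
Qed.

Lemma reach_self (T : finType) (Gs : nat -> rel T) p k : p \in reach Gs p k.
Proof. by elim: k => [|k IH] /=; rewrite !inE ?eqxx ?IH. Qed.

Lemma reach_sub (T : finType) (Gs : nat -> rel T) p k :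
  reach Gs p k \subset reach Gs p k.+1.
Proof. exact: subsetUl. Qed.

Lemma reach_grow (T : finType) (Gs : nat -> rel T) x k :
  (forall y, connect (Gs k.+1) x y) -> reach Gs x k != setT ->
  #|reach Gs x k| < #|reach Gs x k.+1|.
Proof.
move=> Hx Hn; apply: proper_card; apply/properP; split; first exact: reach_sub.
have [y Hy] : exists y, y \notin reach Gs x k.
  apply/existsP; move: Hn; apply: contraR; rewrite negb_exists => /forallP H.
  by apply/eqP/setP => z; rewrite inE; move: (H z); rewrite negbK.
have /connectP [s Hs Hl] := Hx y.
have Hl' : last x s \notin reach Gs x k by rewrite -Hl.
have [a [b [Gab Ha Hb]]] := path_leave Hs (reach_self Gs x k) Hl'.
exists b => //; rewrite /= !inE; apply/orP; right; apply/existsP; exists a.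
by rewrite Ha Gab.
Qed.

Lemma part1 (n : nat) (Gs : nat -> rel 'I_n) :
     2 <= n ->
     (forall r, 0 < r -> simple_digraph (Gs r) /\ at_most_one_root (Gs r)) ->
     exists p : 'I_n, forall q : 'I_n,
       causal_dist_finite Gs 1 p q /\ causal_dist_le Gs 1 p q (n * (n - 2) + 1).
Proof.
move=> Hn Hr.
have n0 : 0 < n by lia.
pose x0 : 'I_n := Ordinal n0.
pose Phi t := \sum_(p : 'I_n) #|reach Gs p t|.
have claim : forall t, ~~ [exists p, reach Gs p t == setT] -> n + t <= Phi t.
  elim=> [|t IH] Hnf.
    rewrite addn0 /Phi.
    have E : \sum_(p : 'I_n) 1 = n by rewrite sum_nat_const card_ord muln1.
    have L : \sum_(p : 'I_n) 1 <= \sum_(p : 'I_n) #|reach Gs p 0|.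
      by apply: leq_sum => p _; rewrite /= cards1.
    by rewrite E in L.
  have Hnf' : ~~ [exists p, reach Gs p t == setT].
    move: Hnf; apply: contra => /existsP [p /eqP Hp]; apply/existsP; exists p.
    by rewrite eqEsubset subsetT /= -Hp reach_sub.
  have IH' := IH Hnf'.
  have [_ H1] := Hr t.+1 isT.
  have [x Hx] := universal x0 H1.
  have Hxn : reach Gs x t != setT.
    by apply: contra Hnf' => Hx'; apply/existsP; exists x.
  have Hg := reach_grow Hx Hxn.
  have Hs : \sum_(p | p != x) #|reach Gs p t| <= \sum_(p | p != x) #|reach Gs p t.+1|.
    by apply: leq_sum => p _; apply: subset_leq_card; apply: reach_sub.
  have E1 : Phi t = #|reach Gs x t| + \sum_(p | p != x) #|reach Gs p t| by rewrite /Phi (bigD1 x).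
  have E2 : Phi t.+1 = #|reach Gs x t.+1| + \sum_(p | p != x) #|reach Gs p t.+1| by rewrite /Phi (bigD1 x).
  lia.
set T := n * (n - 2) + 1.
have [/existsP [p /eqP Hp] | Hnf] := boolP [exists p, reach Gs p T == setT].
  exists p => q.
  have Hc : causal_chain Gs 1 T p q by apply: reach_chain; rewrite Hp inE.
  split; [exists T | exists T] => //; rewrite /T; lia.
exfalso.
have H1 := claim T Hnf.
have H2 : Phi T <= \sum_(p : 'I_n) (n - 1).
  apply: leq_sum => p _.
  have Hp : reach Gs p T != setT.
    by apply: contra Hnf => Hx'; apply/existsP; exists p.
  rewrite -properT in Hp.
  have := proper_card Hp; rewrite cardsT card_ord; lia.
rewrite sum_nat_const card_ord in H2.
rewrite /T in H1.
move: H1 H2; move: (Phi T) => P.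
have [m E] : exists m, n = m.+2 by exists (n - 2); lia.
rewrite E !subSS subn0; nia.
Qed.

Lemma part2 (n : nat) : 2 < n ->
     exists Gs : nat -> rel 'I_n,
       (forall r, 0 < r -> simple_digraph (Gs r) /\ exactly_one_root (Gs r)) /\
       ~ (exists p : 'I_n, forall q : 'I_n, causal_dist_finite Gs 1 q p).
Proof.
move=> Hn.
have n0 : 0 < n by lia.
have n1 : 1 < n by lia.
have n2 : 2 < n by lia.
pose z : 'I_n := Ordinal n0.
pose G : rel 'I_n := fun a b => (a == z) && (b != z).
have noin : forall s (x : 'I_n), path G x s -> last x s = z -> x = z.
  elim=> [|y s IH] x //= /andP [Gxy Hp] Hl.
  have Hy := IH _ Hp Hl; move: Gxy; rewrite /G Hy eqxx andbF //.
exists (fun _ => G); split.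
  move=> r _; split; first by move=> p; rewrite /G; case: (p == z).
  exists [set z]; split.
    split.
      exists z; first by rewrite inE.
      move=> q; rewrite inE; apply/idP/idP.
        by move=> /eqP ->; rewrite connect0.
      move=> /andP [_ /connectP [s Hs Hl]]; apply/eqP; exact: noin Hs (esym Hl).
    move=> p q; rewrite !inE => /eqP -> _; rewrite /G eqxx andbF //.
  move=> R' [[u Hu HR] Hin].
  have Huz : u = z.
    apply/eqP; apply/negP => Hne.
    have Hz : z \notin R'.
      rewrite HR; apply/negP => /andP [/connectP [s Hs Hl] _].
      by move: Hne; rewrite (noin _ _ Hs (esym Hl)) eqxx.
    by move: (Hin _ _ Hu Hz); rewrite /G eqxx /=; apply/negP; rewrite negbK; apply/negP.
  apply/setP => q; rewrite HR inE Huz; apply/idP/idP.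
    move=> /andP [_ /connectP [s Hs Hl]]; apply/eqP; exact: noin Hs (esym Hl).
  by move=> /eqP ->; rewrite connect0.
move=> [p Hp].
pose o1 : 'I_n := Ordinal n1.
pose o2 : 'I_n := Ordinal n2.
have stuck : forall (q : 'I_n), q != z -> forall k t r, causal_chain (fun _ => G) t k q r -> r = q.
  move=> q Hq; elim=> [|k IH] t r /=; first by move=> ->.
  move=> [r' [[-> | Hg] Hc]]; first exact: IH Hc.
  by move: Hg; rewrite /G (negbTE Hq).
have [q [Hqz Hqp]] : exists q : 'I_n, q != z /\ q != p.
  case: (eqVneq o1 p) => H.
    by exists o2; split; [|rewrite -H]; apply/eqP => /(congr1 val).
  by exists o1; split => //; apply/eqP => /(congr1 val).
have [k _ Hc] := Hp q.
by move: Hqp; rewrite (stuck q Hqz _ _ _ Hc) eqxx.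
Qed.

Theorem lemma14 :
  (forall (n : nat) (Gs : nat -> rel 'I_n),
     2 <= n ->
     (forall r, 0 < r -> simple_digraph (Gs r) /\ at_most_one_root (Gs r)) ->
     exists p : 'I_n, forall q : 'I_n,
       causal_dist_finite Gs 1 p q /\ causal_dist_le Gs 1 p q (n * (n - 2) + 1))
  /\
  (forall n : nat, 2 < n ->
     exists Gs : nat -> rel 'I_n,
       (forall r, 0 < r -> simple_digraph (Gs r) /\ exactly_one_root (Gs r)) /\
       ~ (exists p : 'I_n, forall q : 'I_n, causal_dist_finite Gs 1 q p)).
Proof. split; [exact: part1 | exact: part2]. Qed.
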